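(* For every fixed $t>0$, assume the symmetric kernel $k_t$ satisfies $\int\int k_t(y,x)^2\,p_H(y)\,p_H(x)\,dy\,dx=c_t^2<+\infty$, and let $K_t:\mathbb{H}\to\mathbb{H}$ be the continuous linear operator defined by $\langle K_tu,v\rangle_{\mathbb{H}}=\int_{\mathbb{R}^\nu}\int_{\mathbb{R}^\nu}k_t(y,x)\,u(x)\,v(y)\,p_H(y)\,p_H(x)\,dy\,dx$ for all $u,v\in\mathbb{H}$. Then: (a) for all $u,v\in\mathbb{H}$, $\langle K_tu,v\rangle_{\mathbb{H}}=\sum_{\alpha\in\mathbb{N}}b_\alpha(t)\langle u,\psi_\alpha\rangle_{\mathbb{H}}\langle v,\psi_\alpha\rangle_{\mathbb{H}}$, $K_t$ is a positive symmetric operator on $\mathbb{H}$, and $K_tu=\sum_{\alpha}b_\alpha(t)\langle u,\psi_\alpha\rangle_{\mathbb{H}}\psi_\alpha$; (b) for all $\alpha\in\mathbb{N}$, $\psi_\alpha\in\mathbb{H}$ is an eigenfunction, independent of $t$, of $K_t$ for the positive eigenvalue $b_\alpha(t)=\exp(-\lambda_\alpha t)$: $K_t\psi_\alpha=b_\alpha(t)\psi_\alpha$, where $1=b_0(t)>b_1(t)\ge b_2(t)\ge\cdots$; consequently $\langle K_t\psi_\alpha,\psi_\beta\rangle_{\mathbb{H}}=b_\alpha(t)\delta_{\alpha\beta}$ for all $\alpha,\beta$; (c) for all $u\in\mathbb{H}$, $\|K_tu\|_{\mathbb{H}}^2=\sum_\alpha b_\alpha(t)^2\langle u,\psi_\alpha\rangle_{\mathbb{H}}^2$,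 and $\sum_{\alpha\in\mathbb{N}}\|K_t\psi_\alpha\|_{\mathbb{H}}^2=c_t^2=\sum_\alpha b_\alpha(t)^2<+\infty$; therefore $K_t$ is a Hilbert–Schmidt operator on $\mathbb{H}$.
   Context: Let $\nu\ge1$, $n_d>1$, and $\eta^1,\dots,\eta^{n_d}\in\mathbb{R}^\nu$ with $\frac1{n_d}\sum_j\eta^j=0$, $\frac1{n_d-1}\sum_j\eta^j(\eta^j)^T=I_\nu$. Put $s=\big(\frac{4}{n_d(2+\nu)}\big)^{1/(\nu+4)}$, $\hat s=s/\sqrt{s^2+(n_d-1)/n_d}$, $p_H(\eta)=\frac1{n_d}\sum_{j}(\sqrt{2\pi}\,\hat s)^{-\nu}\exp(-\frac{1}{2\hat s^2}\|\eta-\frac{\hat s}{s}\eta^j\|^2)$ (strictly positive, continuous) and $\Phi=-\log\big((\sqrt{2\pi}\hat s)^{\nu}p_H\big)$. Let $\mathbb{H}=L^2(\mathbb{R}^\nu;p_H)$ with $\langle u,v\rangle_{\mathbb{H}}=\int uv\,p_H\,dy$. Let $\hat L(q)=\mathcal{V}q-\frac12\nabla^2q$ with $\mathcal{V}=\frac18\|\nabla\Phi\|^2-\frac14\nabla^2\Phi$, with condition at infinity $\lim_{\|y\|\to\infty}p_H^{1/2}\|\nabla(p_H^{-1/2}q)\|=0$. Standing hypotheses: $\hat L$ has countable spectrum $0=\lambda_0<\lambda_1\le\lambda_2\le\cdots$ with finite multiplicities, and its eigenfunctions $\{q_\alpha\}$ form an orthonormal Hilbert basis of $L^2(\mathbb{R}^\nu)$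 with $q_0=p_H^{1/2}$. Put $\psi_\alpha=q_\alpha p_H^{-1/2}$ (an orthonormal Hilbert basis of $\mathbb{H}$ with $\psi_0\equiv1$). Let $\rho(y,t\,|\,x,0)$ be the transition density of the Itô SDE $dY=-\frac12\nabla\Phi(Y)\,dt+dW$ ($W$ a standard $\nu$-dimensional Wiener process) from $Y(0)=x$, assumed to admit for $t>0$ the representation $\rho(y,t\,|\,x,0)=p_H(y)^{1/2}p_H(x)^{-1/2}\sum_{\alpha}e^{-\lambda_\alpha t}q_\alpha(y)q_\alpha(x)$. Define $k_t(y,x)=\rho(y,t\,|\,x,0)/p_H(y)$ (symmetric in $(y,x)$) and $b_\alpha(t)=e^{-\lambda_\alpha t}$. *)

(* Defs.v *)
From HB Require Import structures.
From mathcomp Require Import all_boot all_order all_algebra.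
From mathcomp Require Import all_classical all_reals all_analysis.
Set Implicit Arguments. Unset Strict Implicit. Unset Printing Implicit Defensive.
Import Order.TTheory GRing.Theory Num.Theory.
Import numFieldNormedType.Exports.
Local Open Scope classical_set_scope.
Local Open Scope ring_scope.

Section prod_sfm.
Variable R : realType.
Context d1 d2 (T1 : measurableType d1) (T2 : measurableType d2).
Variables (m1 : {sigma_finite_measure set T1 -> \bar R})
          (m2 : {sigma_finite_measure set T2 -> \bar R}).
Lemma prod_sigma_finite : sigma_finite setT (m1 \x m2)%E.
Proof.
have /sigma_finiteP[F [TF ndF Foo]] := sigma_finiteT m1.
have /sigma_finiteP[G [TG ndG Goo]] := sigma_finiteT m2.
exists (fun n => F n `*` G n).
 rewrite -setXTT TF TG predeqE => -[x y]; split.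
    move=> [/= [n _ Fnx] [k _ Gky]]; exists (maxn n k) => //; split.
    - by move: x Fnx; exact/subsetPset/ndF/leq_maxl.
    - by move: y Gky; exact/subsetPset/ndG/leq_maxr.
  by move=> [n _ []/= ? ?]; split; exists n.
move=> k; have [? ?] := Foo k; have [? ?] := Goo k.
split; first exact: measurableX.
by rewrite product_measure1E// lte_mul_pinfty// ge0_fin_numE.
Qed.
Definition prod_sfm : {sigma_finite_measure set (T1 * T2)%type -> \bar R} :=
  HB.pack_for {sigma_finite_measure set (T1 * T2)%type -> \bar R} (m1 \x m2)%E
    (Measure_isSigmaFinite.Build _ _ _ (m1 \x m2)%E prod_sigma_finite).
End prod_sfm.

Section Rn.
Variable R : realType.

Record packed := Pack {
  pdisp : measure_display;
  pT : measurableType pdisp;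
  pm : {sigma_finite_measure set pT -> \bar R} }.

(** [lebn n] : Lebesgue measure on R^(n+1) = R * (R * ( ... * R)) *)
Fixpoint lebn (n : nat) : packed :=
  match n with
  | 0 => @Pack _ _ (@lebesgue_measure R)
  | n'.+1 => @Pack _ _ (@prod_sfm R _ _ _ _ (@lebesgue_measure R) (pm (lebn n')))
  end.

(** i-th coordinate (0-based) of a point of R^(n+1) *)
Fixpoint coordn (n : nat) : pT (lebn n) -> nat -> R :=
  match n return pT (lebn n) -> nat -> R with
  | 0 => fun y _ => (y : R)
  | n'.+1 => fun y i => if i is i'.+1 then @coordn n' y.2 i' else (y.1 : R)
  end.

Fixpoint shiftn (n : nat) : pT (lebn n) -> nat -> R -> pT (lebn n) :=
  match n return pT (lebn n) -> nat -> R -> pT (lebn n) with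
  | 0 => fun y i h => if i is 0 then ((y : R) + h : R) else y
  | n'.+1 => fun y i h =>
      if i is i'.+1 then (y.1, @shiftn n' y.2 i' h) else (((y.1 : R) + h : R), y.2)
  end.
End Rn.

(** R^nu (nu >= 1) and its Lebesgue measure *)
Definition Rsp (R : realType) (nu : nat) : Type := pT (lebn R nu.-1).
Definition leb (R : realType) (nu : nat) := pm (lebn R nu.-1).
Definition coordp (R : realType) (nu : nat) (y : Rsp R nu) (i : nat) : R :=
  coordn y i.
Definition shiftp (R : realType) (nu : nat) (y : Rsp R nu) (i : nat) (h : R)
  : Rsp R nu := shiftn y i h.

Section Setting.
Variables (R : realType) (nu nd : nat) (eta : 'I_nd -> 'I_nu -> R).
Local Notation X := (Rsp R nu).

Definition enorm (y : X) : R := Num.sqrt (\sum_(i < nu) coordp y i ^+ 2).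

Definition pdiff (f : X -> R) (i : nat) (y : X) : R :=
  derive1 (fun h : R => f (shiftp y i h)) 0.
Definition gradsq (f : X -> R) (y : X) : R := \sum_(i < nu) (pdiff f i y) ^+ 2.
Definition lap (f : X -> R) (y : X) : R := \sum_(i < nu) pdiff (pdiff f i) i y.

Definition s_bw : R :=
  (4 / (nd%:R * (2 + nu%:R))) `^ (1 / (nu%:R + 4)).
Definition shat : R := s_bw / Num.sqrt (s_bw ^+ 2 + (nd%:R - 1) / nd%:R).

Definition pH (y : X) : R :=
  1 / nd%:R * \sum_(j < nd)
    (Num.sqrt (2 * pi) * shat) ^- nu *
      expR (- (\sum_(i < nu) (coordp y i - shat / s_bw * eta j i) ^+ 2)
              / (2 * shat ^+ 2)).

Definition Phi (y : X) : R := - ln ((Num.sqrt (2 * pi) * shat) ^+ nu * pH y).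

Definition Vpot (y : X) : R := gradsq Phi y / 8 - lap Phi y / 4.

Definition Lhat (q : X -> R) (y : X) : R := Vpot y * q y - lap q y / 2.

Definition inH (u : X -> R) : Prop :=
  measurable_fun setT u /\
  (\int[leb R nu]_y ((u y) ^+ 2 * pH y)%:E < +oo)%E.
Definition ipH (u v : X -> R) : R :=
  Rintegral (leb R nu) setT (fun y => u y * v y * pH y).
Definition normH (u : X -> R) : R := Num.sqrt (ipH u u).

(** orthonormal Hilbert basis of H (equality in H is a.e. equality) *)
Definition hilbert_basisH (e : nat -> X -> R) : Prop :=
  (forall a, inH (e a)) /\
  (forall a b, ipH (e a) (e b) = (a == b)%:R) /\
  (forall u, inH u -> (forall a, ipH u (e a) = 0) ->
     {ae leb R nu, forall y, u y = 0}).

Definition hilbert_schmidtH (K : (X -> R) -> (X -> R)) : Prop :=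
  exists e : nat -> X -> R, hilbert_basisH e /\
    exists l : R, (\sum_(a < n) normH (K (e a)) ^+ 2) @[n --> \oo] --> l.
End Setting.

Section Derived.
Variables (R : realType) (nu nd : nat) (eta : 'I_nd -> 'I_nu -> R).
Local Notation X := (Rsp R nu).
Definition psi (q : nat -> X -> R) (a : nat) (y : X) : R :=
  q a y / Num.sqrt (pH eta y).
Definition kt (rho : R -> X -> X -> R) (t : R) (y x : X) : R :=
  rho t y x / pH eta y.
End Derived.
Definition bt (R : realType) (lam : nat -> R) (t : R) (a : nat) : R :=
  expR (- (lam a * t)).

(* Main.v *)
Require Import Defs.
From HB Require Import structures.
From mathcomp Require Import all_boot all_order all_algebra.
From mathcomp Require Import all_classical all_reals all_analysis.
From mathcomp Require Import measurable_realfun.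
From mathcomp Require Import ring lra.
From mathcomp Require Import zify.
Set Implicit Arguments. Unset Strict Implicit. Unset Printing Implicit Defensive.
Import Order.TTheory GRing.Theory Num.Theory.
Import numFieldNormedType.Exports.
Local Open Scope classical_set_scope.
Local Open Scope ring_scope.
Section L2.
Context d (T : measurableType d) (R : realType) (mu : {measure set T -> \bar R}) (w : T -> R).
Hypothesis mw : measurable_fun setT w.
Hypothesis w0 : forall x, 0 <= w x.

Lemma intD (f g : T -> R) : mu.-integrable setT (EFin \o f) ->
  mu.-integrable setT (EFin \o g) -> mu.-integrable setT (EFin \o (fun x => f x + g x)).
Proof.
move=> hf hg; apply: eq_integrable (integrableD measurableT hf hg) => //.
Qed.

Lemma intZ (k : R) (f : T -> R) : mu.-integrable setT (EFin \o f) ->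
  mu.-integrable setT (EFin \o (fun x => k * f x)).
Proof.
move=> hf; apply: eq_integrable (integrableZl measurableT k hf) => //.
Qed.

Definition L2 (f : T -> R) := measurable_fun setT f /\
  (\int[mu]_x ((f x) ^+ 2 * w x)%:E < +oo)%E.
Definition ip (f g : T -> R) := Rintegral mu setT (fun x => f x * g x * w x).

Lemma ipC f g : ip f g = ip g f.
Proof. by apply: eq_Rintegral => x _; rewrite (mulrC (f x)). Qed.

Lemma L2_int2 f : L2 f -> mu.-integrable setT (EFin \o (fun x => f x ^+ 2 * w x)).
Proof.
case=> mf fi; apply/integrableP; split.
  by apply/measurable_EFinP; apply: measurable_funM => //; exact: measurable_funX.
rewrite (le_lt_trans _ fi)// le_eqVlt; apply/orP; left; apply/eqP.
by apply: eq_integral => x _ /=; rewrite ger0_norm// mulr_ge0// sqr_ge0.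
Qed.

Lemma L2_int f g : L2 f -> L2 g ->
  mu.-integrable setT (EFin \o (fun x => f x * g x * w x)).
Proof.
move=> hf hg; have If := L2_int2 hf; have Ig := L2_int2 hg.
case: hf => mf _; case: hg => mg _.
apply: (le_integrable _ _ _ (integrableD measurableT If Ig)) => //.
  by apply/measurable_EFinP; apply: measurable_funM => //; exact: measurable_funM.
move=> x _ /=; rewrite lee_fin.
rewrite [X in _ <= X]ger0_norm; last by rewrite addr_ge0 // mulr_ge0 // ?sqr_ge0.
rewrite !normrM (ger0_norm (w0 x)) -mulrDl ler_wpM2r //.
have h1 := sqr_ge0 (`|f x| - `|g x|).
have h2 := normr_ge0 (f x); have h3 := normr_ge0 (g x).
rewrite -(real_normK (num_real (f x))) -(real_normK (num_real (g x))).
nra.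
Qed.

Lemma L2P (f : T -> R) : measurable_fun setT f ->
  mu.-integrable setT (EFin \o (fun x => f x ^+ 2 * w x)) -> L2 f.
Proof.
move=> mf /integrableP[_ fi]; split => //; rewrite (le_lt_trans _ fi)//.
have mF : measurable_fun setT (fun x => (f x ^+ 2 * w x)%:E).
  by apply/measurable_EFinP; apply: measurable_funM => //; exact: measurable_funX.
apply: ge0_le_integral => //.
- by move=> x _; rewrite lee_fin mulr_ge0 ?sqr_ge0.
- exact: measurableT_comp.
- by move=> x _ /=; rewrite lee_fin ler_norm.
Qed.

Lemma L2_lin r f g : L2 f -> L2 g -> L2 (fun x => r * f x + g x).
Proof.
move=> hf hg; have [mf _] := hf; have [mg _] := hg.
apply: L2P.
  by apply: measurable_funD => //; exact: measurable_funM.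
have E : (fun x => (r * f x + g x) ^+ 2 * w x) =
  (fun x => (r ^+ 2) * (f x ^+ 2 * w x) + ((2 * r) * (f x * g x * w x) + g x ^+ 2 * w x)).
  by apply/funext => x; ring.
rewrite E.
apply: intD; first exact/intZ/L2_int2.
apply: intD; last exact: L2_int2.
exact/intZ/L2_int.
Qed.

End L2.
Section L2b.
Context d (T : measurableType d) (R : realType) (mu : {measure set T -> \bar R}) (w : T -> R).
Hypothesis mw : measurable_fun setT w.
Hypothesis w0 : forall x, 0 <= w x.
Local Notation L2 := (L2 mu w).
Local Notation ip := (ip mu w).
Let ipCw f g : ip f g = ip g f := ipC mu w f g.

Lemma L2_0 : L2 (fun _ => 0).
Proof.
split; first exact: measurable_cst.
rewrite (_ : (fun x => _) = cst 0%E); first by rewrite integral0.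
by apply/funext => x; rewrite expr0n /= mul0r.
Qed.

Lemma L2B f g : L2 f -> L2 g -> L2 (fun x => f x - g x).
Proof.
move=> hf hg; have := L2_lin mw w0 (-1) hg hf.
by rewrite (_ : (fun x => _) = (fun x => f x - g x)) //; apply/funext => x; ring.
Qed.

Lemma L2Z r f : L2 f -> L2 (fun x => r * f x).
Proof.
move=> hf; have := L2_lin mw w0 r hf L2_0.
by rewrite (_ : (fun x => _) = (fun x => r * f x)) //; apply/funext => x; ring.
Qed.

Lemma ip_lin r f h g : L2 f -> L2 h -> L2 g ->
  ip (fun x => r * f x + h x) g = r * ip f g + ip h g.
Proof.
move=> hf hh hg; rewrite /ip.
rewrite (@eq_Rintegral _ _ _ mu setT (fun x => r * (f x * g x * w x) + h x * g x * w x)); last first.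
  by move=> x _; ring.
rewrite RintegralD //; last exact: L2_int.
  by rewrite RintegralZl //; exact: L2_int.
exact/intZ/L2_int.
Qed.

Lemma ipB f h g : L2 f -> L2 h -> L2 g ->
  ip (fun x => f x - h x) g = ip f g - ip h g.
Proof.
move=> hf hh hg; have := ip_lin (-1) hh hf hg.
rewrite (_ : (fun x => _) = (fun x => f x - h x)); last by apply/funext => x; ring.
by move=> ->; ring.
Qed.

Lemma ip0 g : ip (fun _ => 0) g = 0.
Proof.
rewrite /ip (@eq_Rintegral _ _ _ mu setT (fun _ => 0)); last by move=> x _; rewrite !mul0r.
by rewrite Rintegral_cst // mul0r.
Qed.

Lemma ip_ge0 f : 0 <= ip f f.
Proof. by apply: Rintegral_ge0 => x _; rewrite mulr_ge0 // -expr2 sqr_ge0. Qed.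

Lemma L2E f : L2 f -> (\int[mu]_x ((f x) ^+ 2 * w x)%:E)%E = (ip f f)%:E.
Proof.
move=> hf; rewrite /ip /Rintegral.
under [in RHS]eq_integral do rewrite -expr2.
by rewrite fineK //; exact: integrable_fin_num (L2_int2 mw w0 hf).
Qed.

Lemma ip_sum n (c : nat -> R) (e : nat -> T -> R) g : (forall a, L2 (e a)) -> L2 g ->
  L2 (fun x => \sum_(a < n) c a * e a x) /\
  ip (fun x => \sum_(a < n) c a * e a x) g = \sum_(a < n) c a * ip (e a) g.
Proof.
move=> he hg; elim: n => [|n [IH1 IH2]].
  rewrite (_ : (fun x => _) = (fun _ => 0)); last by apply/funext => x; rewrite big_ord0.
  by rewrite big_ord0 ip0; split => //; exact: L2_0.
rewrite (_ : (fun x => _) = (fun x => c n * e n x + \sum_(a < n) c a * e a x)); last first.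
  by apply/funext => x; rewrite big_ord_recr /= addrC.
split; first exact: L2_lin.
by rewrite ip_lin // IH2 big_ord_recr /= addrC.
Qed.

Lemma ip_sqr_le f g : L2 f -> L2 g -> ip f g ^+ 2 <= ip f f * ip g g.
Proof.
move=> hf hg.
have key r : 0 <= r ^+ 2 * ip f f + 2 * r * ip f g + ip g g.
  have := ip_ge0 (fun x => r * f x + g x).
  have hl := L2_lin mw w0 r hf hg.
  rewrite ip_lin // ipCw ip_lin // (ipCw g (fun x => r * f x + g x)) ip_lin // (ipCw g f).
  by move=> h; rewrite (le_trans h) // le_eqVlt; apply/orP; left; apply/eqP; ring.
set A := ip f f in key *; set B := ip g g in key *; set C := ip f g in key *.
have A0 : 0 <= A by exact: ip_ge0.
have [A0'|Anz] := eqVneq A 0.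
  have [C0|Cn0] := eqVneq C 0; first by rewrite C0 expr0n /= mulr_ge0 // ip_ge0.
  have := key (- (B + 1) / (2 * C)); rewrite A0' mulr0 add0r.
  rewrite (_ : 2 * _ * C = - (B + 1)); last by field.
  by move=> h; exfalso; lra.
have Agt0 : 0 < A by rewrite lt0r Anz.
have := key (- C / A).
rewrite (_ : _ + _ + B = (A * B - C ^+ 2) / A); last by field.
move=> h; have := mulr_ge0 h (ltW Agt0); rewrite divfK // => h2.
lra.
Qed.
End L2b.
Lemma lim_uniq (R : realType) (u : nat -> R) (a b : R) :
  u n @[n --> \oo] --> a -> u n @[n --> \oo] --> b -> a = b.
Proof. move=> h1 h2; exact: (cvg_unique _ h1 h2). Qed.

Lemma cvg_ev (R : realType) (u : nat -> R) N (l : R) :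
  (forall n, (N <= n)%N -> u n = l) -> u n @[n --> \oo] --> l.
Proof. move=> H; apply: cvg_near_cst; exists N => // n /= Nn; exact: H. Qed.

Lemma cvgE_real (R : realType) (u : nat -> R) (l : R) :
  u n @[n --> \oo] --> l -> (u n)%:E @[n --> \oo] --> l%:E.
Proof. by move=> h; apply: cvg_EFin => //; near=> n. Unshelve. all: by end_near. Qed.

Lemma sum_delta (R : realType) (F : nat -> R) (a : nat) n :
  \sum_(i < n) F i * ((i : nat) == a)%:R = if (a < n)%N then F a else 0.
Proof.
elim: n => [|n IH]; first by rewrite big_ord0.
rewrite big_ord_recr /= IH.
have [an|na] := ltnP a n.
  by rewrite ltnS ltnW // (gtn_eqF an) mulr0 addr0.
rewrite ltnS; case: (eqVneq n a) => [->|ne]; first by rewrite leqnn mulr1 add0r.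
rewrite mulr0 addr0.
have -> : (a <= n)%N = false.
  by apply/negbTE; rewrite -ltnNge ltn_neqAle ne na.
by [].
Qed.

Lemma cvg_shift_eq (R : realType) (u : nat -> R) (l : R) k :
  u n @[n --> \oo] --> l -> u (n + k)%N @[n --> \oo] --> l.
Proof. by move=> h; rewrite (cvg_shiftn k u). Qed.
Section Series.
Context d (T : measurableType d) (R : realType) (mu : {measure set T -> \bar R}) (w : T -> R).
Hypothesis mw : measurable_fun setT w.
Hypothesis w0 : forall x, 0 <= w x.
Local Notation L2 := (L2 mu w).
Local Notation ip := (ip mu w).
Let ipCw f g : ip f g = ip g f := ipC mu w f g.
Variable e : nat -> T -> R.
Hypothesis eL2 : forall a, L2 (e a).
Hypothesis eON : forall a b, ip (e a) (e b) = (a == b)%:R.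
Variable c : nat -> R.
Let s n x := \sum_(a < n) c a * e a x.
Let S n := \sum_(a < n) c a ^+ 2.

Let sL2 n : L2 (s n).
Proof. exact: (ip_sum mw w0 n c eL2 (eL2 0)).1. Qed.

Let s_e n b : ip (s n) (e b) = if (b < n)%N then c b else 0.
Proof.
rewrite (ip_sum mw w0 n c eL2 (eL2 b)).2.
under eq_bigr do rewrite eON.
exact: sum_delta.
Qed.

Let s_s m n : (n <= m)%N -> ip (s m) (s n) = S n.
Proof.
move=> nm; rewrite ipCw (ip_sum mw w0 n c eL2 (sL2 m)).2.
apply: eq_bigr => i _; rewrite ipCw s_e (leq_trans (ltn_ord i) nm).
by rewrite expr2.
Qed.

Let s_diff m n : (n <= m)%N ->
  ip (fun x => s m x - s n x) (fun x => s m x - s n x) = S m - S n.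
Proof.
move=> nm; have hB := L2B mw w0 (sL2 m) (sL2 n).
rewrite ipB // !(ipCw _ (fun x => s m x - s n x)) !ipB //.
rewrite (ipCw (s n) (s m)) !s_s //; ring.
Qed.

Let S_nd : {homo S : n m / (n <= m)%N >-> n <= m}.
Proof.
move=> n m nm; rewrite -subr_ge0 -s_diff //; exact: ip_ge0.
Qed.

Variable L : R.
Hypothesis hSL : S n @[n --> \oo] --> L.
Variable g : T -> R.
Hypothesis hg : forall x, s n x @[n --> \oo] --> g x.

Let SL n : S n <= L.
Proof.
have hc : cvgn S by apply/cvg_ex; exists L.
by have := nondecreasing_cvgn_le S_nd hc n; rewrite (cvg_lim _ hSL).
Qed.

Let mg : measurable_fun setT g.
Proof.
apply: (measurable_fun_cvg (h := s)) => [m|x _]; first by case: (sL2 m).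
exact: hg.
Qed.

Let bound n : (\int[mu]_x ((g x - s n x) ^+ 2 * w x)%:E <= (L - S n)%:E)%E.
Proof.
pose f m := fun x => ((s (m + n)%N x - s n x) ^+ 2 * w x)%:E.
have mf m : measurable_fun setT (f m).
  apply/measurable_EFinP; apply: measurable_funM => //; apply: measurable_funX.
  by apply: measurable_funB; [case: (sL2 (m + n)) | case: (sL2 n)].
have f0 m x : setT x -> (0 <= f m x)%E.
  by move=> _; rewrite lee_fin mulr_ge0 // sqr_ge0.
have := @fatou d T R mu setT measurableT f mf f0.
have hx x : limn_einf (f ^~ x) = ((g x - s n x) ^+ 2 * w x)%:E.
  apply: (cvg_limn_einf_sup _).1; apply: cvgE_real.
  have h1 : s (m + n)%N x @[m --> \oo] --> g x.
    exact: (@cvg_shift_eq R (fun m => s m x) (g x) n (@hg x)).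
  rewrite (_ : (fun m => _) = (fun m => w x * ((s (m + n)%N x - s n x) * (s (m + n)%N x - s n x)))); last first.
    by apply/funext => m; rewrite /= expr2 mulrC.
  rewrite expr2 mulrC; apply: cvgMr.
  by apply: cvgM; apply: cvgB => //; exact: cvg_cst.
rewrite (_ : (\int[mu]_(x in setT) limn_einf (f^~ x))%E =
   (\int[mu]_x ((g x - s n x)^+2 * w x)%:E)%E); last first.
  by apply: eq_integral => x _; exact: hx.
have hI m : (\int[mu]_x f m x = (S (m + n)%N - S n)%:E)%E.
  by rewrite /f L2E // ?s_diff ?leq_addl //; exact: L2B.
have hE : (fun m => (\int[mu]_(x in setT) f m x)%E) = (fun m => (S (m + n)%N - S n)%:E).
  by apply/funext => m; exact: hI.
have hc : (S (m + n)%N - S n)%:E @[m --> \oo] --> (L - S n)%:E.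
  apply: cvgE_real; apply: cvgB; last exact: cvg_cst.
  exact: (@cvg_shift_eq R S L n hSL).
by rewrite hE (cvg_limn_einf_sup hc).1.
Qed.

Let gsL2 n : L2 (fun x => g x - s n x).
Proof.
split; first by apply: measurable_funB => //; case: (sL2 n).
exact: (le_lt_trans (bound n) (ltry _)).
Qed.

Let gL2 : L2 g.
Proof.
have := gsL2 0; rewrite (_ : (fun x => _) = g) //.
by apply/funext => x; rewrite /s big_ord0 subr0.
Qed.

Let gs_le n : ip (fun x => g x - s n x) (fun x => g x - s n x) <= L - S n.
Proof. by rewrite -lee_fin -L2E //. Qed.

Lemma series_ip v : L2 v ->
  (\sum_(a < n) c a * ip (e a) v) @[n --> \oo] --> ip g v.
Proof.
move=> hv.
rewrite (_ : (fun n => \sum_(a < n) c a * ip (e a) v) = (fun n => ip (s n) v)); last first.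
  by apply/funext => n; rewrite (ip_sum mw w0 n c eL2 hv).2.
apply/cvgrPdist_le => eps eps0.
have hLS : (L - S n) * ip v v @[n --> \oo] --> 0.
  rewrite -(mul0r (ip v v)); apply: cvgMl.
  rewrite -(subrr L); apply: cvgB => //; exact: cvg_cst.
have : \forall n \near \oo, `|0 - (L - S n) * ip v v| <= eps ^+ 2.
  move/cvgrPdist_le : hLS => /(_ (eps ^+ 2)) H; apply: H; exact: exprn_gt0.
apply: filterS => n hn.
have CS := ip_sqr_le mw w0 (gsL2 n) hv.
rewrite (ipB mw w0 gL2 (sL2 n) hv) in CS.
have h1 := gs_le n.
have h2 : 0 <= ip v v := ip_ge0 mu w0 v.
have h3 : 0 <= L - S n by rewrite subr_ge0.
have h4 : ip (fun x => g x - s n x) (fun x => g x - s n x) * ip v v <= (L - S n) * ip v v.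
  by rewrite ler_wpM2r.
rewrite sub0r normrN ger0_norm ?mulr_ge0 // in hn.
set D := ip g v - ip (s n) v in CS *.
have hD : D ^+ 2 <= eps ^+ 2 by lra.
rewrite -(real_normK (num_real D)) in hD.
have := normr_ge0 D; nra.
Qed.

Lemma series_e a : ip g (e a) = c a.
Proof.
apply: (lim_uniq (series_ip (eL2 a))).
under eq_fun do under eq_bigr do rewrite eON.
apply: (cvg_ev (N := a.+1)) => n an; rewrite sum_delta.
by rewrite an.
Qed.

Lemma series_gg : ip g g = L.
Proof.
apply: (lim_uniq (series_ip gL2)).
under eq_fun do under eq_bigr do rewrite ipCw series_e -expr2.
exact: hSL.
Qed.

Lemma series_L2 : L2 g.
Proof. exact: gL2. Qed.
End Series.
Lemma psum_nd (R : realType) (u : nat -> R) : (forall a, 0 <= u a) ->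
  {homo (fun n => \sum_(a < n) u a) : n m / (n <= m)%N >-> n <= m}.
Proof.
move=> u0 n m nm /=; rewrite (big_ord_widen m u nm).
rewrite [X in _ <= X](bigID (fun i : 'I_m => (i < n)%N)) /= lerDl.
by apply: sumr_ge0 => i _; exact: u0.
Qed.

Lemma lim_ge0 (R : realType) (u : nat -> R) (l : R) :
  (forall n, 0 <= u n) -> u n @[n --> \oo] --> l -> 0 <= l.
Proof.
move=> h hl.
have H : \forall n \near \oo, 0 <= u n by near=> n; exact: h.
exact: (@closed_cvg nat R _ _ u [set x : R | 0 <= x] (@closed_ge R 0) H l hl).
Unshelve. all: by end_near.
Qed.

Lemma cvg_psum (R : realType) (u v : nat -> R) :
  (forall a, 0 <= u a) -> (forall a, u a <= v a) ->
  cvgn (fun n => \sum_(a < n) v a) -> cvgn (fun n => \sum_(a < n) u a).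
Proof.
move=> u0 uv hv; apply: nondecreasing_is_cvgn; first exact: psum_nd.
have v0 a : 0 <= v a by exact: le_trans (u0 a) (uv a).
exists (limn (fun n => \sum_(a < n) v a)) => _ [n _ <-].
apply: le_trans (nondecreasing_cvgn_le (psum_nd v0) hv n).
by apply: ler_sum => i _; exact: uv.
Qed.
Lemma nneseries_real (R : realType) (u : nat -> R) (l : R) :
  (\sum_(a < n) u a) @[n --> \oo] --> l -> (\sum_(a <oo) (u a)%:E)%E = l%:E.
Proof.
move=> h; apply: cvg_lim => //.
rewrite (_ : (fun n => _) = (fun n => (\sum_(a < n) u a)%:E)); first exact: cvgE_real.
by apply/funext => n; rewrite sumEFin big_mkord.
Qed.

Lemma real_of_nneseries (R : realType) (u : nat -> R) (l : R) : (forall a, 0 <= u a) ->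
  (\sum_(a <oo) (u a)%:E)%E = l%:E -> (\sum_(a < n) u a) @[n --> \oo] --> l.
Proof.
move=> u0 hs.
have hc : cvgn (fun n => (\sum_(0 <= i < n) (u i)%:E)%E).
  by apply: is_cvg_nneseries => n _ _; rewrite lee_fin.
have h2 : (\sum_(0 <= i < n) (u i)%:E)%E @[n --> \oo] --> l%:E by rewrite -hs.
have h3 : (fine \o (fun n => (\sum_(0 <= i < n) (u i)%:E)%E)) x @[x --> \oo] --> l.
  exact: fine_cvg h2.
rewrite (_ : (fine \o _) = (fun n => \sum_(a < n) u a)) in h3 => //.
by apply/funext => n; rewrite /= sumEFin big_mkord.
Qed.
Section Main.
Context d (T : measurableType d) (R : realType) (mu : {measure set T -> \bar R}) (w : T -> R).
Hypothesis mw : measurable_fun setT w.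
Hypothesis w0 : forall x, 0 <= w x.
Local Notation L2 := (L2 mu w).
Local Notation ip := (ip mu w).
Let ipCw f g : ip f g = ip g f := ipC mu w f g.
Variable e : nat -> T -> R.
Hypothesis eL2 : forall a, L2 (e a).
Hypothesis eON : forall a b, ip (e a) (e b) = (a == b)%:R.
Variable b : nat -> R.
Hypothesis b0 : forall a, 0 <= b a.
Hypothesis b1 : forall a, b a <= 1.
Variable k : T -> T -> R.
Hypothesis hk : forall x y, (\sum_(a < n) (b a * e a x) * e a y) @[n --> \oo] --> k y x.
Hypothesis hdiag : forall x, cvgn (fun n => \sum_(a < n) b a * e a x ^+ 2).
Variable K : (T -> R) -> (T -> R).
Hypothesis hK_H : forall u, L2 u -> L2 (K u).
Hypothesis hK_form : forall u v, L2 u -> L2 v ->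
  ip (K u) v = Rintegral mu setT (fun x => Rintegral mu setT (fun y =>
       k y x * u x * v y * w y * w x)).

Lemma ipZ r f g : L2 f -> L2 g -> ip (fun x => r * f x) g = r * ip f g.
Proof.
move=> hf hg; have := ip_lin mw w0 r hf (L2_0 mu w) hg.
rewrite ip0 addr0 => <-; congr ip; apply/funext => x; by rewrite addr0.
Qed.

Let csq x : cvgn (fun n => \sum_(a < n) (b a * e a x) ^+ 2).
Proof.
have H := @cvg_psum R (fun a => (b a * e a x) ^+ 2) (fun a => b a * e a x ^+ 2).
apply: H; [move=> a; exact: sqr_ge0| move=> a | exact: hdiag].
rewrite exprMn; have h := mulr_ge0 (b0 a) (sqr_ge0 (e a x)); have h2 := b1 a; nra.
Qed.

Let kL2 x : L2 (fun y => k y x).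
Proof. exact: (series_L2 mw w0 eL2 eON (c := fun a => b a * e a x) (L := limn (fun n => \sum_(a < n) (b a * e a x) ^+ 2)) (@csq x) (g := fun y => k y x) (@hk x)). Qed.

Let k_ip x v : L2 v ->
  (\sum_(a < n) (b a * e a x) * ip (e a) v) @[n --> \oo] --> ip (fun y => k y x) v.
Proof. exact: (series_ip mw w0 eL2 eON (c := fun a => b a * e a x) (L := limn (fun n => \sum_(a < n) (b a * e a x) ^+ 2)) (@csq x) (g := fun y => k y x) (@hk x)). Qed.

Let k_gg x : ip (fun y => k y x) (fun y => k y x) = limn (fun n => \sum_(a < n) (b a * e a x) ^+ 2).
Proof. exact: (series_gg mw w0 eL2 eON (c := fun a => b a * e a x) (L := limn (fun n => \sum_(a < n) (b a * e a x) ^+ 2)) (@csq x) (g := fun y => k y x) (@hk x)). Qed.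

Lemma bessel v n : L2 v -> \sum_(a < n) ip v (e a) ^+ 2 <= ip v v.
Proof.
move=> hv.
pose c a := ip v (e a).
have [tL2 tv] := ip_sum mw w0 n c eL2 hv.
set t := (fun x => _) in tL2 tv.
have te a : ip t (e a) = if (a < n)%N then c a else 0.
  rewrite (ip_sum mw w0 n c eL2 (eL2 a)).2.
  under eq_bigr do rewrite eON.
  exact: sum_delta.
have tt : ip t t = \sum_(a < n) c a ^+ 2.
  rewrite (ip_sum mw w0 n c eL2 tL2).2; apply: eq_bigr => i _.
  by rewrite ipCw te ltn_ord expr2.
have := ip_ge0 mu w0 (fun x => v x - t x).
have hB := L2B mw w0 hv tL2.
rewrite ipB // !(ipCw _ (fun x => v x - t x)) !ipB // tt (ipCw v t) tv.
have -> : \sum_(a < n) c a * ip (e a) v = \sum_(a < n) c a ^+ 2.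
  by apply: eq_bigr => i _; rewrite ipCw expr2.
rewrite /c; lra.
Qed.

Section Fixv.
Variable v : T -> R.
Hypothesis hv : L2 v.
Let F x := ip (fun y => k y x) v.
Let c' a := b a * ip (e a) v.

Let csq' : cvgn (fun n => \sum_(a < n) c' a ^+ 2).
Proof.
apply: nondecreasing_is_cvgn; first exact: (@psum_nd R (fun a => c' a ^+ 2) (fun a => sqr_ge0 _)).
exists (ip v v) => _ [n _ <-].
apply: le_trans (@bessel v n hv); apply: ler_sum => i _.
rewrite /c' ipCw exprMn; have h := mulr_ge0 (b0 i) (sqr_ge0 (ip v (e i))); have h2 := b1 i; have h3 := b0 i; nra.
Qed.

Let hF x : (\sum_(a < n) c' a * e a x) @[n --> \oo] --> F x.
Proof.
have := @k_ip x v hv.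
rewrite (_ : (fun n => \sum_(a < n) (b a * e a x) * ip (e a) v) =
  (fun n => \sum_(a < n) c' a * e a x)) //.
by apply/funext => n; apply: eq_bigr => i _; rewrite /c'; ring.
Qed.

Let FL2 : L2 F.
Proof. exact: (series_L2 mw w0 eL2 eON csq' hF). Qed.

Lemma main_form u : L2 u ->
  (\sum_(a < n) b a * ip u (e a) * ip v (e a)) @[n --> \oo] --> ip (K u) v.
Proof.
move=> hu.
have E : ip (K u) v = ip F u.
  rewrite hK_form // /ip; apply: eq_Rintegral => x _.
  rewrite (@eq_Rintegral _ _ _ mu setT (fun y => (u x * w x) * (k y x * v y * w y))); last first.
    by move=> y _; ring.
  rewrite RintegralZl //; last exact: (L2_int mw w0 (kL2 x) hv).
  by rewrite /F /ip; ring.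
rewrite E.
have := series_ip mw w0 eL2 eON csq' hF hu.
rewrite (_ : (fun n => \sum_(a < n) c' a * ip (e a) u) =
  (fun n => \sum_(a < n) b a * ip u (e a) * ip v (e a))) //.
by apply/funext => n; apply: eq_bigr => i _; rewrite /c' !(ipCw (e i)); ring.
Qed.
End Fixv.

Lemma KE u a : L2 u -> ip (K u) (e a) = b a * ip u (e a).
Proof.
move=> hu; apply: (lim_uniq (main_form (eL2 a) hu)).
apply: (cvg_ev (N := a.+1)) => n an.
under eq_bigr do rewrite eON eq_sym.
by rewrite (sum_delta (fun i => b i * ip u (e i))) an.
Qed.

Lemma K_sym u v : L2 u -> L2 v -> ip (K u) v = ip u (K v).
Proof.
move=> hu hv; rewrite (ipCw u).
apply: (lim_uniq (main_form hv hu)).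
rewrite (_ : (fun n => _) = (fun n => \sum_(a < n) b a * ip v (e a) * ip u (e a))).
  exact: main_form.
by apply/funext => n; apply: eq_bigr => i _; ring.
Qed.

Lemma K_pos u : L2 u -> 0 <= ip (K u) u.
Proof.
move=> hu; apply: (lim_ge0 _ (main_form hu hu)) => n.
apply: sumr_ge0 => i _; rewrite -mulrA mulr_ge0 // -expr2; exact: sqr_ge0.
Qed.

Lemma K_norm u : L2 u ->
  (\sum_(a < n) b a ^+ 2 * ip u (e a) ^+ 2) @[n --> \oo] --> ip (K u) (K u).
Proof.
move=> hu; have := main_form (hK_H hu) hu.
rewrite (_ : (fun n => _) = (fun n => \sum_(a < n) b a ^+ 2 * ip u (e a) ^+ 2)) //.
by apply/funext => n; apply: eq_bigr => i _; rewrite KE //; ring.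
Qed.
Lemma K_conv u : L2 u ->
  Num.sqrt (ip (fun y => K u y - \sum_(a < n) b a * ip u (e a) * e a y)
               (fun y => K u y - \sum_(a < n) b a * ip u (e a) * e a y))
    @[n --> \oo] --> 0.
Proof.
move=> hu; have hK := hK_H hu.
set N := ip (K u) (K u).
pose c a := b a * ip u (e a).
have E n : ip (fun y => K u y - \sum_(a < n) b a * ip u (e a) * e a y)
               (fun y => K u y - \sum_(a < n) b a * ip u (e a) * e a y) =
           N - \sum_(a < n) c a ^+ 2.
  have [tL2 tK] := ip_sum mw w0 n c eL2 hK.
  set t := (fun x => _) in tL2 tK.
  have te a : ip t (e a) = if (a < n)%N then c a else 0.
    rewrite (ip_sum mw w0 n c eL2 (eL2 a)).2.
    under eq_bigr do rewrite eON.
    exact: sum_delta.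
  have tt : ip t t = \sum_(a < n) c a ^+ 2.
    rewrite (ip_sum mw w0 n c eL2 tL2).2; apply: eq_bigr => i _.
    by rewrite ipCw te ltn_ord expr2.
  have hB := L2B mw w0 hK tL2.
  rewrite ipB // !(ipCw _ (fun x => K u x - t x)) !ipB // tt (ipCw (K u) t) tK.
  have -> : \sum_(a < n) c a * ip (e a) (K u) = \sum_(a < n) c a ^+ 2.
    by apply: eq_bigr => i _; rewrite ipCw KE // expr2.
  rewrite /N; ring.
rewrite (_ : (fun n => _) = (fun n => Num.sqrt (N - \sum_(a < n) c a ^+ 2))); last first.
  by apply/funext => n; rewrite E.
have h2 : \sum_(a < n) c a ^+ 2 @[n --> \oo] --> N.
  rewrite (_ : (fun n => \sum_(a < n) c a ^+ 2) = (fun n => \sum_(a < n) b a ^+ 2 * ip u (e a) ^+ 2)).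
    exact: K_norm.
  by apply/funext => n; rewrite /c; apply: eq_bigr => i _; rewrite exprMn.
have h : N - \sum_(a < n) c a ^+ 2 @[n --> \oo] --> 0.
  rewrite -[X in _ --> X](subrr N); apply: cvgB => //; exact: cvg_cst.
rewrite -[X in _ --> X]sqrtr0.
exact: (@continuous_cvg nat R R \oo _ (fun n => N - \sum_(a < n) c a ^+ 2) Num.sqrt 0
  (@sqrt_continuous R 0) h).
Qed.

Lemma K_ee a j : ip (K (e a)) (e j) = b a * (a == j)%:R.
Proof.
rewrite KE // eON; case: (eqVneq a j) => [->|]; first by [].
by rewrite !mulr0.
Qed.

Section Comp.
Hypothesis hcomp : forall f, L2 f -> (forall a, ip f (e a) = 0) ->
  {ae mu, forall y, f y = 0}.

Lemma K_eig a : {ae mu, forall y, K (e a) y = b a * e a y}.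
Proof.
have hK := hK_H (eL2 a).
have hZ := L2Z mw w0 (b a) (eL2 a).
have hf := L2B mw w0 hK hZ.
have := hcomp hf.
have H : forall j, ip (fun y => K (e a) y - b a * e a y) (e j) = 0.
  move=> j; rewrite ipB // ipZ // K_ee eON; ring.
move=> /(_ H); apply: filterS => y /= /eqP; rewrite subr_eq0 => /eqP.
done.
Qed.
End Comp.
Section Cst.
Variable c : R.
Hypothesis hc : (\int[mu]_x \int[mu]_y ((k y x) ^+ 2 * w y * w x)%:E)%E = (c ^+ 2)%:E.

Lemma K_c : (\sum_(a < n) b a ^+ 2) @[n --> \oo] --> c ^+ 2.
Proof.
have inner x : (\int[mu]_y ((k y x) ^+ 2 * w y * w x)%:E)%E
   = (\sum_(a <oo) ((b a * e a x) ^+ 2 * w x)%:E)%E.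
  have hS := @csq x.
  rewrite (@nneseries_real R _ (limn (fun n => \sum_(a < n) (b a * e a x) ^+ 2) * w x)); last first.
    rewrite (_ : (fun n => \sum_(a < n) (b a * e a x) ^+ 2 * w x) =
                 (fun n => (\sum_(a < n) (b a * e a x) ^+ 2) * w x)); last first.
      by apply/funext => n; rewrite mulr_suml.
    by apply: cvgMl; exact: hS.
  rewrite (_ : (fun y => ((k y x) ^+ 2 * w y * w x)%:E) =
               (fun y => ((w x)%:E * ((k y x) ^+ 2 * w y)%:E)%E)); last first.
    by apply/funext => y; rewrite -EFinM; congr EFin; ring.
  rewrite ge0_integralZl_EFin //.
  - by rewrite L2E // k_gg -EFinM mulrC.
  - by move=> y _; rewrite lee_fin mulr_ge0 // sqr_ge0.
  - have [mk _] := kL2 x.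
    by apply/measurable_EFinP; apply: measurable_funM => //; exact: measurable_funX.
have hc2 := hc.
rewrite (_ : (\int[mu]_x \int[mu]_y ((k y x) ^+ 2 * w y * w x)%:E)%E =
    (\int[mu]_x (\sum_(a <oo) ((b a * e a x) ^+ 2 * w x)%:E))%E) in hc2; last first.
  by apply: eq_integral => x _; exact: inner.
rewrite integral_nneseries // in hc2; last 2 first.
- move=> a; apply/measurable_EFinP; apply: measurable_funM => //.
  apply: measurable_funX; apply: measurable_funM; first exact: measurable_cst.
  by case: (eL2 a).
- by move=> a x _; rewrite lee_fin mulr_ge0 // sqr_ge0.
rewrite (@eq_eseriesr _ _ (fun a => ((b a) ^+ 2)%:E)) in hc2; last first.
  move=> a _.
  rewrite (_ : (fun x => ((b a * e a x) ^+ 2 * w x)%:E) =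
               (fun x => (((b a) ^+ 2)%:E * ((e a x) ^+ 2 * w x)%:E)%E)); last first.
    by apply/funext => x; rewrite -EFinM; congr EFin; ring.
  rewrite ge0_integralZl_EFin //.
  - by rewrite L2E // eON eqxx -EFinM mulr1.
  - by move=> y _; rewrite lee_fin mulr_ge0 // sqr_ge0.
  - have [me _] := eL2 a.
    by apply/measurable_EFinP; apply: measurable_funM => //; exact: measurable_funX.
  - exact: sqr_ge0.
by apply: real_of_nneseries hc2 => a; exact: sqr_ge0.
Qed.
End Cst.
End Main.
Lemma shat_gt0 (R : realType) (nu nd : nat) : (1 < nd)%N -> 0 < @shat R nu nd.
Proof.
move=> hnd; rewrite /shat; apply: divr_gt0.
  rewrite /s_bw; apply: powR_gt0; apply: divr_gt0 => //.
  by apply: mulr_gt0; [rewrite ltr0n; lia | rewrite ltr_wpDr // ler0n].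
rewrite sqrtr_gt0; apply: ltr_wpDr.
  apply: divr_ge0; last exact: ler0n.
  by rewrite subr_ge0 ler1n; lia.
rewrite exprn_gt0 // /s_bw; apply: powR_gt0; apply: divr_gt0 => //.
by apply: mulr_gt0; [rewrite ltr0n; lia | rewrite ltr_wpDr // ler0n].
Qed.

Lemma pH_gt0 (R : realType) (nu nd : nat) (eta : 'I_nd -> 'I_nu -> R) :
  (1 < nd)%N -> forall y, 0 < pH eta y.
Proof.
move=> hnd y; rewrite /pH; apply: mulr_gt0.
  by rewrite div1r invr_gt0 ltr0n; lia.
case: nd eta hnd => [|[|nd']] eta hnd //.
rewrite big_ord_recl; apply: ltr_pwDl.
  apply: mulr_gt0; last exact: expR_gt0.
  have hs := @shat_gt0 R nu _ hnd.
  by rewrite invr_gt0 exprn_gt0 // (mulr_gt0 _ hs) // sqrtr_gt0 mulr_gt0 // pi_gt0.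
apply: sumr_ge0 => i _; apply: mulr_ge0; last exact: ltW (expR_gt0 _).
have hs := @shat_gt0 R nu _ hnd.
by rewrite invr_ge0 exprn_ge0 // (mulr_ge0 _ (ltW hs)) // sqrtr_ge0.
Qed.

Lemma lam_ge0 (R : realType) (lam : nat -> R) : lam 0%N = 0 -> 0 < lam 1%N ->
  (forall a, (1 <= a)%N -> lam a <= lam a.+1) -> forall a, 0 <= lam a.
Proof.
move=> h0 h1 hm a; case: a => [|a]; first by rewrite h0.
elim: a => [|a IH]; first exact: ltW.
by apply: le_trans IH (hm _ _).
Qed.

Unset Implicit Arguments.

Theorem proposition2 (R : realType) (nu nd : nat) (eta : 'I_nd -> 'I_nu -> R)
  (hnu : (1 <= nu)%N) (hnd : (1 < nd)%N)
  (heta_mean : forall i : 'I_nu, 1 / nd%:R * \sum_(j < nd) eta j i = 0)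
  (heta_cov : forall i k : 'I_nu,
     1 / (nd%:R - 1) * \sum_(j < nd) eta j i * eta j k = (i == k)%:R)
  (* spectrum of \hat L *)
  (lam : nat -> R) (hlam0 : lam 0%N = 0) (hlam1 : 0 < lam 1%N)
  (hlam_mono : forall a, (1 <= a)%N -> lam a <= lam a.+1)
  (hlam_mult : forall a, exists N, forall b, (N <= b)%N -> lam b != lam a)
  (* eigenfunctions q_alpha: orthonormal Hilbert basis of L^2(R^nu) *)
  (q : nat -> Rsp R nu -> R)
  (hq_meas : forall a, measurable_fun setT (q a))
  (hq_L2 : forall a, (\int[leb R nu]_y ((q a y) ^+ 2)%:E < +oo)%E)
  (hq_orth : forall a b,
     Rintegral (leb R nu) setT (fun y => q a y * q b y) = (a == b)%:R)
  (hq_complete : forall f : Rsp R nu -> R, measurable_fun setT f ->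
     (\int[leb R nu]_y ((f y) ^+ 2)%:E < +oo)%E ->
     (forall a, Rintegral (leb R nu) setT (fun y => f y * q a y) = 0) ->
     {ae leb R nu, forall y, f y = 0})
  (hq0 : forall y, q 0%N y = Num.sqrt (pH eta y))
  (hq_diff : forall a (i : 'I_nu) (y : Rsp R nu),
     derivable (fun h : R => q a (shiftp y i h)) 0 1 /\
     derivable (fun h : R => pdiff (q a) i (shiftp y i h)) 0 1)
  (hq_eig : forall a y, Lhat eta (q a) y = lam a * q a y)
  (hq_inf : forall a (e : R), 0 < e -> exists M : R, forall y, M < enorm y ->
     Num.sqrt (pH eta y) *
       Num.sqrt (gradsq (fun z => q a z / Num.sqrt (pH eta z)) y) < e)
  (* transition density: spectral representation *)
  (rho : R -> Rsp R nu -> Rsp R nu -> R)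
  (hrho : forall t, 0 < t -> forall y x,
     (Num.sqrt (pH eta y) / Num.sqrt (pH eta x) *
        \sum_(a < n) expR (- (lam a * t)) * q a y * q a x) @[n --> \oo]
       --> rho t y x)
  (t : R) (ht : 0 < t)
  (c : R)
  (hc : (\int[leb R nu]_x \int[leb R nu]_y
          ((kt eta rho t y x) ^+ 2 * pH eta y * pH eta x)%:E)%E = (c ^+ 2)%:E)
  (K : (Rsp R nu -> R) -> (Rsp R nu -> R))
  (hK_H : forall u, inH eta u -> inH eta (K u))
  (hK_lin : forall (r : R) u v, inH eta u -> inH eta v ->
     {ae leb R nu, forall y, K (fun z => r * u z + v z) y = r * K u y + K v y})
  (hK_bdd : exists C : R, forall u, inH eta u -> normH eta (K u) <= C * normH eta u)
  (hK_form : forall u v, inH eta u -> inH eta v ->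
     ipH eta (K u) v =
     Rintegral (leb R nu) setT (fun x => Rintegral (leb R nu) setT (fun y =>
       kt eta rho t y x * u x * v y * pH eta y * pH eta x))) :
  (* (a) *)
  ((forall u v, inH eta u -> inH eta v ->
     (\sum_(a < n) bt lam t a * ipH eta u (psi eta q a) * ipH eta v (psi eta q a))
       @[n --> \oo] --> ipH eta (K u) v) /\
   (forall u v, inH eta u -> inH eta v -> ipH eta (K u) v = ipH eta u (K v)) /\
   (forall u, inH eta u -> 0 <= ipH eta (K u) u) /\
   (forall u, inH eta u ->
     normH eta (fun y => K u y -
        \sum_(a < n) bt lam t a * ipH eta u (psi eta q a) * psi eta q a y)
       @[n --> \oo] --> 0)) /\
  (* (b) *)
  ((forall a, inH eta (psi eta q a) /\ 0 < bt lam t a /\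
      {ae leb R nu, forall y, K (psi eta q a) y = bt lam t a * psi eta q a y}) /\
   bt lam t 0%N = 1 /\ bt lam t 1%N < bt lam t 0%N /\
   (forall a, (1 <= a)%N -> bt lam t a.+1 <= bt lam t a) /\
   (forall a b, ipH eta (K (psi eta q a)) (psi eta q b) = bt lam t a * (a == b)%:R)) /\
  (* (c) *)
  ((forall u, inH eta u ->
     (\sum_(a < n) bt lam t a ^+ 2 * ipH eta u (psi eta q a) ^+ 2) @[n --> \oo]
       --> normH eta (K u) ^+ 2) /\
   (\sum_(a < n) normH eta (K (psi eta q a)) ^+ 2) @[n --> \oo] --> c ^+ 2 /\
   (\sum_(a < n) bt lam t a ^+ 2) @[n --> \oo] --> c ^+ 2 /\
   hilbert_schmidtH eta K).
Proof.
have wpos := pH_gt0 eta hnd.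
have hw_sq y : pH eta y = q 0%N y ^+ 2 by rewrite hq0 sqr_sqrtr // ltW.
have q0pos y : 0 < q 0%N y by rewrite hq0 sqrtr_gt0.
have mw : measurable_fun setT (pH eta).
  rewrite (_ : pH eta = fun y => q 0%N y ^+ 2); last by apply/funext => y; exact: hw_sq.
  exact: measurable_funX.
have w0 y : 0 <= pH eta y by exact: ltW.
have psiE a y : psi eta q a y = q a y / q 0%N y by rewrite /psi hq0.
have mpsi a : measurable_fun setT (psi eta q a).
  rewrite (_ : psi eta q a = fun y => q a y * expR (- ln (q 0%N y))); last first.
    apply/funext => y; rewrite psiE expRN lnK //; exact: q0pos.
  apply: measurable_funM => //; apply: measurableT_comp; first exact: measurable_expR.
  apply: measurableT_comp => //; apply: measurableT_comp => //; exact: measurable_ln.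
have eL2 a : L2 (leb R nu) (pH eta) (psi eta q a).
  split; first exact: mpsi.
  rewrite (_ : (fun x => _) = (fun y => ((q a y) ^+ 2)%:E)); first exact: hq_L2.
  apply/funext => y; rewrite psiE hw_sq; congr EFin.
  have := q0pos y; rewrite lt0r => /andP[hn _]; field; by rewrite ?hn.
have eON a b : ip (leb R nu) (pH eta) (psi eta q a) (psi eta q b) = (a == b)%:R.
  rewrite -hq_orth; apply: eq_Rintegral => y _; rewrite !psiE hw_sq.
  have := q0pos y; rewrite lt0r => /andP[hn _]; field; by rewrite ?hn.
pose b := bt lam t.
have hlam := lam_ge0 hlam0 hlam1 hlam_mono.
have b0 a : 0 <= b a by rewrite /b /bt ltW // expR_gt0.
have b1 a : b a <= 1.
  by rewrite /b /bt expR_le1 oppr_le0 mulr_ge0 // ltW.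
have hk x y : (\sum_(a < n) (b a * psi eta q a x) * psi eta q a y) @[n --> \oo]
    --> kt eta rho t y x.
  have H := hrho t ht y x.
  rewrite /kt.
  rewrite (_ : (fun n => \sum_(a < n) (b a * psi eta q a x) * psi eta q a y) =
     (fun n => (Num.sqrt (pH eta y) / Num.sqrt (pH eta x) *
        \sum_(a < n) expR (- (lam a * t)) * q a y * q a x) * (pH eta y)^-1)).
    by apply: cvgMl.
  apply/funext => n; rewrite mulr_sumr mulr_suml; apply: eq_bigr => i _.
  rewrite /b /bt !psiE -!hq0 hw_sq.
  have := q0pos y; rewrite lt0r => /andP[hny _].
  have := q0pos x; rewrite lt0r => /andP[hnx _].
  field.
  by rewrite hnx hny.
have hdiag x : cvgn (fun n => \sum_(a < n) b a * psi eta q a x ^+ 2).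
  apply/cvg_ex; exists (kt eta rho t x x).
  rewrite (_ : (fun n => _) = (fun n => \sum_(a < n) (b a * psi eta q a x) * psi eta q a x)).
    exact: hk.
  by apply/funext => n; apply: eq_bigr => i _; rewrite expr2 mulrA.
have hcomp : forall f, L2 (leb R nu) (pH eta) f ->
    (forall a, ip (leb R nu) (pH eta) f (psi eta q a) = 0) ->
    {ae leb R nu, forall y, f y = 0}.
  move=> f [mf fi] hf.
  have := hq_complete (fun y => f y * q 0%N y).
  have m1 : measurable_fun setT (fun y => f y * q 0%N y).
    exact: measurable_funM.
  have i1 : (\int[leb R nu]_y ((f y * q 0%N y) ^+ 2)%:E < +oo)%E.
    rewrite (_ : (fun y => _) = (fun y => ((f y) ^+ 2 * pH eta y)%:E)) //.
    by apply/funext => y; rewrite hw_sq exprMn.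
  have o1 a : Rintegral (leb R nu) setT (fun y => f y * q 0%N y * q a y) = 0.
    rewrite -(hf a); apply: eq_Rintegral => y _; rewrite psiE hw_sq.
    have := q0pos y; rewrite lt0r => /andP[hn _]; field; by rewrite ?hn.
  move=> /(_ m1 i1 o1); apply: filterS => y /eqP; rewrite mulf_eq0 => /orP[/eqP //|].
  by have := q0pos y; rewrite lt0r => /andP[/negbTE -> _].
have hK_form' : forall u v, L2 (leb R nu) (pH eta) u -> L2 (leb R nu) (pH eta) v ->
  ip (leb R nu) (pH eta) (K u) v = Rintegral (leb R nu) setT (fun x =>
    Rintegral (leb R nu) setT (fun y => kt eta rho t y x * u x * v y * pH eta y * pH eta x)).
  exact: hK_form.
have hK_H' : forall u, L2 (leb R nu) (pH eta) u -> L2 (leb R nu) (pH eta) (K u).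
  exact: hK_H.
have KE' := KE mw w0 eL2 eON b0 b1 hk hdiag hK_form'.
have Kn a : normH eta (K (psi eta q a)) ^+ 2 = b a ^+ 2.
  rewrite /normH sqr_sqrtr; last exact: (ip_ge0 (leb R nu) w0).
  apply: (lim_uniq (K_norm mw w0 eL2 eON b0 b1 hk hdiag hK_H' hK_form' (eL2 a))).
  apply: (cvg_ev (N := a.+1)) => n an.
  have sqb : forall z : bool, ((z%:R : R) ^+ 2) = z%:R by case; rewrite ?expr1n ?expr0n.
  rewrite (eq_bigr (fun j : 'I_n => b j ^+ 2 * ((j : nat) == a)%:R)); last first.
    by move=> j _; rewrite eON eq_sym sqb.
  by rewrite (sum_delta (fun j => b j ^+ 2)) an.
have c3 : (\sum_(a < n) b a ^+ 2) @[n --> \oo] --> c ^+ 2.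
  exact: (K_c mw w0 eL2 eON b0 b1 hk hdiag hc).
have c2 : (\sum_(a < n) normH eta (K (psi eta q a)) ^+ 2) @[n --> \oo] --> c ^+ 2.
  rewrite (_ : (fun n => \sum_(a < n) normH eta (K (psi eta q a)) ^+ 2) =
               (fun n => \sum_(a < n) b a ^+ 2)) //.
  by apply/funext => n; apply: eq_bigr => i _; exact: Kn.
split.
  split; [|split; [|split]].
  + by move=> u v hu hv; exact: (main_form mw w0 eL2 eON b0 b1 hk hdiag hK_form' hv hu).
  + by move=> u v hu hv; exact: (K_sym mw w0 eL2 eON b0 b1 hk hdiag hK_form' hu hv).
  + by move=> u hu; exact: (K_pos mw w0 eL2 eON b0 b1 hk hdiag hK_form' hu).
  + by move=> u hu; exact: (K_conv mw w0 eL2 eON b0 b1 hk hdiag hK_H' hK_form' hu).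
split.
  split; [|split; [|split; [|split]]].
  + move=> a; split; first exact: eL2.
  split; first by rewrite /bt expR_gt0.
  exact: (K_eig mw w0 eL2 eON b0 b1 hk hdiag hK_H' hK_form' hcomp a).
  + by rewrite /bt hlam0 mul0r oppr0 expR0.
  + by rewrite /bt hlam0 mul0r oppr0 expR0 expR_lt1 oppr_lt0 mulr_gt0.
  + move=> a ha; rewrite /bt ler_expR lerN2; apply: ler_wpM2r; [exact: ltW | exact: hlam_mono].
  + by move=> a j; exact: (K_ee mw w0 eL2 eON b0 b1 hk hdiag hK_form' a j).
split; [|split; [|split]].
- move=> u hu; rewrite /normH sqr_sqrtr; last exact: (ip_ge0 (leb R nu) w0).
  exact: (K_norm mw w0 eL2 eON b0 b1 hk hdiag hK_H' hK_form' hu).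
- exact: c2.
- exact: c3.
- exists (psi eta q); split; last by exists (c ^+ 2); exact: c2.
  split; first exact: eL2.
  split; first exact: eON.
  exact: hcomp.
Qed.
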